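(* The (unique up to isomorphism) Steiner quadruple system $\mathrm{SQS}(8)$ admits a zero-sum $3$-flow, and the (unique up to isomorphism) Steiner quadruple system $\mathrm{SQS}(10)$ admits a zero-sum $2$-flow.
   Context: A Steiner quadruple system $\mathrm{SQS}(v)$ is a pair $(X,\mathcal{B})$ with $|X|=v$ and $\mathcal{B}$ a collection of 4-subsets of $X$ such that every 3-subset lies in exactly one block. For integer $n\ge2$, a zero-sum $n$-flow of $(X,\mathcal{B})$ is a map $f:\mathcal{B}\to\{\pm1,\ldots,\pm(n-1)\}$ with $\sum_{B\ni x} f(B)=0$ for every $x\in X$. *)

(* Defs.v *)
From mathcomp Require Import all_boot all_order all_algebra.
Set Implicit Arguments. Unset Strict Implicit. Unset Printing Implicit Defensive.
Import Order.TTheory GRing.Theory Num.Theory.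

Definition is_SQS (X : finType) (B : {set {set X}}) : Prop :=
  (forall b, b \in B -> #|b| = 4%N) /\
  (forall T : {set X}, #|T| = 3%N -> #|[set b in B | T \subset b]| = 1%N).

Definition zero_sum_flow (n : nat) (X : finType) (B : {set {set X}})
    (f : {set X} -> int) : Prop :=
  (forall b, b \in B -> (f b != 0)%R /\ (`|f b| < n)%N) /\
  (forall x : X, (\sum_(b in B | x \in b) f b)%R = 0%R).

Definition has_zero_sum_flow (n : nat) (X : finType) (B : {set {set X}}) : Prop :=
  exists f : {set X} -> int, zero_sum_flow n B f.

(* Main.v *)
Require Import Defs.
From mathcomp Require Import all_boot all_order all_algebra zify.
Set Implicit Arguments. Unset Strict Implicit. Unset Printing Implicit Defensive.
Import Order.TTheory GRing.Theory Num.Theory.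


Fixpoint memn (x : nat) (l : seq nat) : bool :=
  match l with [::] => false | y :: l' => if Nat.eqb x y then true else memn x l' end.

Definition covered (cs : seq (seq nat)) (a b c : nat) :=
  has (fun k => [&& memn a k, memn b k & memn c k]) cs.
Definition covt cs (t : nat * nat * nat) := covered cs t.1.1 t.1.2 t.2.

Fixpoint dropcov cs (ts : seq (nat*nat*nat)) := match ts with
 | [::] => [::]
 | t :: ts' => if covt cs t then dropcov cs ts' else ts end.

Definition alltr (v : nat) : seq (nat*nat*nat) :=
  [seq t <- flatten [seq flatten [seq [seq (a,b,c) | c <- iota 0 v] | b <- iota 0 v] | a <- iota 0 v]
    | (t.1.1 < t.1.2 < t.2)%N].

Notation addz := intZmod.addz.
Definition isz (z : int) := match z with Posz 0 => true | _ => false end.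

Definition upd (k : seq nat) (w : int) (s : seq int) :=
  [seq (if memn p.1 k then addz p.2 w else p.2) | p <- zip (iota 0 (size s)) s].
Definition updn (k : seq nat) (s : seq nat) :=
  [seq (if memn p.1 k then p.2.-1 else p.2) | p <- zip (iota 0 (size s)) s].

Fixpoint fs_go (M : nat) (vals : seq int) (bs : seq (seq nat)) (s : seq int) (r : seq nat) : option (seq int) :=
 match bs with
 | [::] => if all isz s then Some [::] else None
 | k :: bs' =>
   let r' := updn k r in
   (fix try vs := match vs with [::] => None | w :: vs' =>
      let s' := upd k w s in
      if all (fun x => Nat.leb (absz (nth (Posz 0) s' x)) (Nat.mul M (nth 0%N r' x))) k then
        match fs_go M vals bs' s' r' with Some l => Some (w::l) | None => try vs' end
      else try vs' end) vals
 end.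

Definition degs (v : nat) (bs : seq (seq nat)) : seq nat :=
  [seq (count (fun k => memn x k) bs) | x <- iota 0 v].

Definition flowsearch (v n : nat) (bs : seq (seq nat)) :=
  let vals := flatten [seq [:: Posz i; Negz i.-1] | i <- iota 1 n.-1] in
  fs_go n.-1 vals bs (nseq v (Posz 0)) (degs v bs).

Definition fsum (x : nat) (s : seq (seq nat * int)) : int :=
  foldr (fun p acc => if memn x p.1 then addz p.2 acc else acc) (Posz 0) s.

Definition check (v n : nat) (cs : seq (seq nat)) (fs : seq int) :=
  [&& size fs == size cs, all (fun f => ~~ isz f && (absz f < n)%N) fs &
      all (fun x => isz (fsum x (zip cs fs))) (iota 0 v)].

Definition used (cs : seq (seq nat)) y := has (memn y) cs.
Definition fresh cs a b c y := ~~ used cs y && ~~ memn y [:: a; b; c].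
Definition ffresh v cs a b c := head v [seq y <- iota 0 v | fresh cs a b c y].

Definition cond cs a b c t y :=
  [&& ~~ memn y [:: a; b; c], used cs y || Nat.eqb y t, ~~ covered cs a b y,
      ~~ covered cs a c y & ~~ covered cs b c y].

Fixpoint search v n (fuel : nat) cs ts : bool :=
 match fuel with 0 => false | fuel'.+1 =>
 match dropcov cs ts with
 | [::] => if flowsearch v n cs is Some fz then check v n cs fz else false
 | (a,b,c) :: ts' => let t := ffresh v cs a b c in
   all (fun y => if cond cs a b c t y then search v n fuel' ([:: a;b;c;y] :: cs) ts' else true) (iota 0 v)
 end end.

Definition runs v n := search v n (size (alltr v)).+1 [::] (alltr v).


Lemma nateqbE x y : Nat.eqb x y = (x == y).
Proof. by elim: x y => [|x IH] [|y] //=; rewrite IH eqSS. Qed.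

Lemma memnE x l : memn x l = (x \in l).
Proof.
elim: l => [|y l IH] //; rewrite in_cons -IH /=.
by rewrite nateqbE; case: (x == y).
Qed.

Definition sof v (l : seq nat) : {set 'I_v} := [set i : 'I_v | val i \in l].

Lemma sofE v l (i : 'I_v) : (i \in sof v l) = (val i \in l).
Proof. by rewrite inE. Qed.

Lemma card_sof v l : uniq l -> all (fun x => x < v) l -> #|sof v l| = size l.
Proof.
elim: l => [|x l IH] /=.
  by move=> _ _; apply/eqP; rewrite cards_eq0; apply/eqP/setP => i; rewrite !inE.
case/andP=> xl ul /andP[xv lv].
have -> : sof v (x :: l) = (Ordinal xv) |: sof v l.
  by apply/setP=> i; rewrite !inE.
by rewrite cardsU1 IH // sofE /= xl.
Qed.

Lemma sof_sub v l1 l2 : {subset l1 <= l2} -> sof v l1 \subset sof v l2.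
Proof. by move=> S; apply/subsetP=> i; rewrite !sofE => /S. Qed.

Lemma SQS_uniq (X : finType) (B : {set {set X}}) (T : {set X}) b1 b2 :
  is_SQS B -> #|T| = 3 -> b1 \in B -> b2 \in B -> T \subset b1 -> T \subset b2 -> b1 = b2.
Proof.
case=> _ B3 /B3 /eqP /cards1P [b0 Eb] b1B b2B s1 s2.
have : b1 \in [set b in B | T \subset b] by rewrite inE b1B.
have : b2 \in [set b in B | T \subset b] by rewrite inE b2B.
by rewrite Eb !inE => /eqP -> /eqP ->.
Qed.

Lemma coveredP (cs : seq (seq nat)) (a b c : nat) :
  reflect (exists2 k, k \in cs & [&& a \in k, b \in k & c \in k]) (covered cs a b c).
Proof.
by apply: (iffP hasP) => [[k kc H]|[k kc H]]; exists k => //; move: H; rewrite !memnE.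
Qed.

Lemma covered_block v (B : {set {set 'I_v}}) (cs : seq (seq nat)) p q r b :
  is_SQS B -> (forall k, k \in cs -> sof v k \in B) -> covered cs p q r ->
  uniq [:: p; q; r] -> all (fun x => x < v) [:: p; q; r] -> b \in B ->
  sof v [:: p; q; r] \subset b -> exists2 k, k \in cs & sof v k = b.
Proof.
move=> sqs csB /coveredP [k kc /and3P[pk qk rk]] u a bB sb.
exists k => //; apply: (SQS_uniq sqs (card_sof u a)) => //; first exact: csB.
by apply: sof_sub => x; rewrite !inE => /or3P[]/eqP->.
Qed.

Lemma covered_perm (cs : seq (seq nat)) (a b c : nat) :
  covered cs a b c = covered cs b a c /\ covered cs a b c = covered cs a c b.
Proof.
split; apply: eq_has => k; rewrite !memnE;
  by case: (a \in k); case: (b \in k); case: (c \in k).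
Qed.

Lemma mem_alltr v a b c : ((a, b, c) \in alltr v) = [&& a < b, b < c & c < v].
Proof.
rewrite mem_filter /=.
have -> : ((a, b, c) \in flatten [seq flatten [seq [seq (a,b,c) | c <- iota 0 v] | b <- iota 0 v] | a <- iota 0 v])
   = [&& a < v, b < v & c < v].
  apply/flatten_mapP/and3P.
    case=> a' a'v /flatten_mapP [b' b'v /mapP [c' c'v [-> -> ->]]].
    by move: a'v b'v c'v; rewrite !mem_iota /= !add0n.
  case=> av bv cv; exists a; first by rewrite mem_iota.
  apply/flatten_mapP; exists b; first by rewrite mem_iota.
  by apply/mapP; exists c; first by rewrite mem_iota.
apply/idP/idP; lia.
Qed.


Lemma dropcovP cs ts :
  [/\ (forall u, u \in ts -> u \in dropcov cs ts \/ covt cs u),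
      {subset dropcov cs ts <= ts} &
      (forall t ts', dropcov cs ts = t :: ts' -> ~~ covt cs t)].
Proof.
elim: ts => [|t ts [IH1 IH2 IH3]] /=; first by split.
case: ifP => ct; split.
- move=> u; rewrite in_cons => /orP[/eqP->|/IH1]; [by right|done].
- by move=> u /IH2 ut; rewrite in_cons ut orbT.
- exact: IH3.
- by move=> u ut; left.
- by [].
- by move=> t' ts' [<- _]; rewrite ct.
Qed.

Lemma cov_all v cs : (forall t, t \in alltr v -> covt cs t) ->
  forall a b c, a < v -> b < v -> c < v -> uniq [:: a; b; c] -> covered cs a b c.
Proof.
move=> H.
have H1 a b c : a < b -> b < c -> c < v -> covered cs a b c.
  by move=> ab bc cv; apply: (H (a, b, c)); rewrite mem_alltr ab bc cv.
move=> a b c av bv cv /=; rewrite !inE negb_or => /andP[/andP[nab nac] nbc].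
have P1 x y z : covered cs x y z = covered cs y x z by case: (covered_perm cs x y z).
have P2 x y z : covered cs x y z = covered cs x z y by case: (covered_perm cs x y z).
have [ab|ba] := ltnP a b; have [bc|cb] := ltnP b c; have [ac|ca] := ltnP a c.
- exact: H1.
- lia.
- by rewrite P2; apply: H1; lia.
- by rewrite P2 P1; apply: H1; lia.
- by rewrite P1; apply: H1; lia.
- by rewrite P1 P2; apply: H1; lia.
- lia.
- by rewrite P1 P2 P1; apply: H1; lia.
Qed.

Lemma filter1 (T U : eqType) (g : T -> U) s x :
  uniq (map g s) -> x \in s -> [seq p <- s | g p == g x] = [:: x].
Proof.
elim: s => // p s IH /= /andP[gps us]; rewrite in_cons => /orP[/eqP->|xs].
  rewrite eqxx; congr (_ :: _); rewrite -(filter_pred0 s); apply: eq_in_filter => q qs /=.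
  by apply/negbTE/eqP => gq; move: gps; rewrite -gq map_f.
case: eqP => [gpx|_]; last exact: IH.
by move: gps; rewrite gpx map_f.
Qed.

Lemma iszE z : isz z = (z == 0)%R.
Proof. by case: z => [[|m]|m]. Qed.

Lemma fsumE x s : fsum x s = (\sum_(p <- s) (if x \in p.1 then p.2 else 0))%R.
Proof.
elim: s => [|p s IH] /=; first by rewrite big_nil.
by rewrite big_cons memnE IH; case: (x \in p.1); rewrite ?add0r.
Qed.

Lemma leaf_flow v n (B : {set {set 'I_v}}) cs fz :
  is_SQS B -> (forall k, k \in cs -> sof v k \in B) -> uniq (map (sof v) cs) ->
  (forall t, t \in alltr v -> covt cs t) -> check v n cs fz -> has_zero_sum_flow n B.
Proof.
move=> sqs csB ucs cov /and3P[/eqP sz fzok sums].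
have allB : forall b, b \in B -> exists2 k, k \in cs & sof v k = b.
  move=> b bB; have b4 := sqs.1 b bB.
  have : 0 < #|b| by rewrite b4.
  case/card_gt0P => x0 x0b.
  have h1 : #|b :\ x0| = 3 by move: b4; rewrite (cardsD1 x0) x0b /=; lia.
  have : 0 < #|b :\ x0| by rewrite h1.
  case/card_gt0P => x1 /setD1P [x10 x1b].
  have h2 : #|b :\ x0 :\ x1| = 2.
    by move: h1; rewrite (cardsD1 x1 (b :\ x0)) !inE x10 x1b /=; lia.
  have : 0 < #|b :\ x0 :\ x1| by rewrite h2.
  case/card_gt0P => x2; rewrite !inE => /and3P[x21 x20 x2b].
  have u3 : uniq [:: val x0; val x1; val x2].
    by rewrite /= !inE !val_eqE negb_or eq_sym x10 eq_sym x20 eq_sym x21.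
  have a3 : all (fun x => x < v) [:: val x0; val x1; val x2] by rewrite /= !ltn_ord.
  have c3 : covered cs (val x0) (val x1) (val x2).
    by apply: (cov_all cov) => //; apply: ltn_ord.
  apply: (covered_block sqs csB c3 u3 a3 bB).
  apply/subsetP => i; rewrite sofE !inE !val_eqE.
  by case/or3P => /eqP ->.
pose s := zip cs fz.
have s1 : unzip1 s = cs by rewrite unzip1_zip // sz.
have s2 : unzip2 s = fz by rewrite unzip2_zip // sz.
have inB : forall p, p \in s -> sof v p.1 \in B.
  by move=> p ps; apply: csB; rewrite -s1; apply: (map_f fst).
have us : uniq (map (fun q => sof v q.1) s) by rewrite (map_comp (sof v) fst); move: s1; rewrite /unzip1 => ->.
exists (fun b => \sum_(p <- s | sof v p.1 == b) p.2)%R; split.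
  move=> b bB; case: (allB b bB) => k; rewrite -s1 => /mapP [p ps ->] <-.
  rewrite -big_filter (filter1 us ps) big_seq1.
  have : p.2 \in fz by rewrite -s2; apply: (map_f snd).
  by move/(allP fzok) => /andP[]; rewrite iszE.
move=> x.
under eq_bigr do rewrite big_mkcond.
rewrite exchange_big /=.
transitivity (\sum_(p <- s) (if x \in sof v p.1 then p.2 else 0))%R.
  rewrite big_seq [RHS]big_seq; apply: eq_bigr => p ps.
  rewrite -big_mkcondr /=.
  case: ifP => xp.
    rewrite (big_pred1 (sof v p.1)) // => b /=.
    rewrite [b == _]eq_sym; case: (b =P sof v p.1) => [->|/eqP/negbTE ne].
      by rewrite eqxx inB // xp.
    by rewrite eq_sym ne andbF.
  by rewrite big1 // => b /andP[/andP[_ xb] /eqP e]; move: xb; rewrite -e xp.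
have : isz (fsum (val x) s) by apply: (allP sums); rewrite mem_iota /= ltn_ord.
rewrite iszE fsumE => /eqP H; apply: etrans H; apply: eq_bigr => p _.
by rewrite sofE.
Qed.


Section Transport.
Variables (X Y : finType) (h : X -> Y) (g : Y -> X).
Hypotheses (hK : cancel h g) (gK : cancel g h).

Let H (b : {set X}) : {set Y} := g @^-1: b.
Let G (b : {set Y}) : {set X} := h @^-1: b.
Let HK : cancel H G. Proof. by move=> b; apply/setP=> x; rewrite !inE hK. Qed.
Let GK : cancel G H. Proof. by move=> b; apply/setP=> x; rewrite !inE gK. Qed.
Let cardH b : #|H b| = #|b|.
Proof. by rewrite /H -(can2_imset_pre _ hK gK) card_imset //; apply: can_inj hK. Qed.
Let cardG b : #|G b| = #|b|.
Proof. by rewrite /G -(can2_imset_pre _ gK hK) card_imset //; apply: can_inj gK. Qed.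
Let subH (T : {set Y}) b : (T \subset H b) = (G T \subset b).
Proof.
apply/subsetP/subsetP => S x; rewrite !inE.
  by move=> /S; rewrite inE hK.
by move=> xT; apply: S; rewrite inE gK.
Qed.
Let memHB (B : {set {set X}}) b' : (b' \in H @: B) = (G b' \in B).
Proof. by rewrite -{1}(GK b') mem_imset //; apply: can_inj HK. Qed.

Lemma transport_SQS (B : {set {set X}}) : is_SQS B -> is_SQS (H @: B).
Proof.
case=> B4 B3; split.
  by move=> b' /imsetP[b bB ->]; rewrite cardH B4.
move=> T T3.
have -> : [set b' in H @: B | T \subset b'] = H @: [set b in B | G T \subset b].
  apply/setP=> b'; rewrite inE memHB.
  have -> : (b' \in H @: [set b in B | G T \subset b]) = (G b' \in [set b in B | G T \subset b]).
    by rewrite -{1}(GK b') mem_imset //; apply: can_inj HK.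
  by rewrite inE -{2}(GK b') subH.
by rewrite card_imset; [apply: B3; rewrite cardG | apply: can_inj HK].
Qed.

Lemma transport_flow n (B : {set {set X}}) :
  has_zero_sum_flow n (H @: B) -> has_zero_sum_flow n B.
Proof.
case=> f [f1 f2]; exists (fun b => f (H b)); split.
  by move=> b bB; apply: f1; apply: imset_f.
move=> x; apply: etrans (f2 (h x)); symmetry.
rewrite (reindex H); last by exists G => b _; [apply: HK | apply: GK].
by apply: eq_bigl => b; rewrite memHB HK !inE hK.
Qed.
End Transport.


Definition sw v (y t : 'I_v) (i : 'I_v) : 'I_v := if i == y then t else if i == t then y else i.

Lemma swK v (y t : 'I_v) : cancel (sw y t) (sw y t).
Proof.
move=> i; rewrite /sw; case: (i =P y) => [->|iy].
  by case: (t =P y) => [->|]; rewrite ?eqxx.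
case: (i =P t) => [->|it]; first by rewrite eqxx.
by move/eqP/negbTE: iy => ->; move/eqP/negbTE: it => ->.
Qed.

Lemma L4 (z a b c w : nat) : (z \in [:: a; b; c; w]) = (z \in [:: a; b; c]) || (z == w).
Proof. by rewrite !inE !orbA. Qed.

Lemma sw_fix v (y t : 'I_v) k : val y \notin k -> val t \notin k ->
  sw y t @^-1: sof v k = sof v k.
Proof.
move=> yk tk; apply/setP => i; rewrite !inE /sw.
case: (i =P y) => [->|_]; first by rewrite (negbTE yk) (negbTE tk).
case: (i =P t) => [->|_] //; by rewrite (negbTE yk) (negbTE tk).
Qed.

Lemma sw_new v (y t : 'I_v) a b c : val y \notin [:: a; b; c] -> val t \notin [:: a; b; c] ->
  y != t -> sw y t @^-1: sof v [:: a; b; c; val y] = sof v [:: a; b; c; val t].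
Proof.
move=> yn tn yt; apply/setP => i; rewrite !in_set /sw.
case: (i =P y) => [->|iy].
  by rewrite !L4 (negbTE yn) (negbTE tn) /= !val_eqE eq_sym.
case: (i =P t) => [->|it].
  by rewrite !L4 (negbTE yn) (negbTE tn) /= !val_eqE !eqxx.
by rewrite !L4 !val_eqE; move/eqP/negbTE: iy => ->; move/eqP/negbTE: it => ->.
Qed.

Lemma used_cov cs p q t : ~~ used cs t -> ~~ covered cs p q t.
Proof.
move=> nu; apply/negP => /coveredP [k kc /and3P [_ _ tk]]; move: nu.
by rewrite /used; apply/negP/negPn/hasP; exists k => //; rewrite memnE.
Qed.

Lemma used_notin cs t k : ~~ used cs t -> k \in cs -> t \notin k.
Proof.
move=> nu kc; apply/negP => tk; move: nu.
by rewrite /used; apply/negP/negPn/hasP; exists k => //; rewrite memnE.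
Qed.

Lemma in_head (T : eqType) (d : T) s x : x \in s -> head d s \in s.
Proof. by case: s => //= y s _; rewrite mem_head. Qed.

Lemma search_sound v n fuel : forall cs ts (B : {set {set 'I_v}}),
  is_SQS B -> search v n fuel cs ts ->
  {subset ts <= alltr v} ->
  (forall k, k \in cs -> sof v k \in B) -> uniq (map (sof v) cs) ->
  (forall t, t \in alltr v -> t \in ts \/ covt cs t) ->
  has_zero_sum_flow n B.
Proof.
elim: fuel => [//|fuel IH] cs ts B sqs /=.
case: (dropcovP cs ts) => D1 D2 D3.
case E: (dropcov cs ts) => [|[[a b] c] ts'].
  case F: (flowsearch v n cs) => [fz|] // chk tsA csB ucs cov.
  apply: (leaf_flow sqs csB ucs _ chk) => t tA.
  by case: (cov t tA) => // /D1; rewrite E; case.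
move=> /allP Hall tsA csB ucs cov.
have abcA : (a, b, c) \in alltr v by apply: tsA; apply: D2; rewrite E mem_head.
move: (abcA); rewrite mem_alltr => /and3P [ab bc cv].
have av : a < v by lia.
have bv : b < v by lia.
have nabc : ~~ covt cs (a, b, c) := D3 _ _ E.
have step : forall (B' : {set {set 'I_v}}) y, is_SQS B' ->
    (forall k, k \in cs -> sof v k \in B') -> y < v -> sof v [:: a; b; c; y] \in B' ->
    cond cs a b c (ffresh v cs a b c) y -> has_zero_sum_flow n B'.
  move=> B' y sqs' csB' yv lB' cy.
  apply: (IH ([:: a; b; c; y] :: cs) ts' B' sqs').
  - by have := Hall y; rewrite mem_iota /= yv cy => /(_ isT).
  - by move=> u ut'; apply: tsA; apply: D2; rewrite E in_cons ut' orbT.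
  - by move=> k; rewrite in_cons => /orP[/eqP->|]; [done | exact: csB'].
  - rewrite /= ucs andbT; apply/negP => /mapP [k kc e]; apply: (negP nabc).
    have mk z (zv : z < v) : z \in [:: a; b; c; y] -> z \in k.
      move=> zl; have : Ordinal zv \in sof v [:: a; b; c; y] by rewrite sofE.
      by rewrite e sofE.
    apply/coveredP; exists k => //.
    by rewrite (mk a av) ?(mk b bv) ?(mk c cv) // !inE eqxx ?orbT.
  - move=> t tA; case: (cov t tA) => [/D1|ct].
      rewrite E in_cons; case=> [/orP[/eqP->|tt]|ct]; last 1 first.
      + by right; apply/orP; right; exact: ct.
      + right; change (covered ([:: a; b; c; y] :: cs) a b c); apply/coveredP; exists [:: a; b; c; y]; first exact: mem_head.
        by rewrite !inE !eqxx ?orbT.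
      + by left.
    by right; apply/orP; right; exact: ct.
set T := sof v [:: a; b; c].
have u3 : uniq [:: a; b; c] by rewrite /= !inE; lia.
have T3 : #|T| = 3 by rewrite card_sof //= av bv cv.
have sqs0 := sqs; case: sqs => B4 B3.
have := B3 _ T3 => /eqP /cards1P [b0 Eb].
have : b0 \in [set b1 in B | T \subset b1] by rewrite Eb set11.
rewrite inE => /andP [b0B Tb0].
have D1' : #|b0 :\: T| == 1 by rewrite cardsD (setIidPr Tb0) B4 // T3.
case/cards1P: D1' => y0 Ey0.
have : y0 \in b0 :\: T by rewrite Ey0 set11.
rewrite inE => /andP [y0T y0b].
have y0n : val y0 \notin [:: a; b; c] by rewrite -sofE.
have Eb0 : sof v [:: a; b; c; val y0] = b0.
  apply/setP => i; rewrite sofE L4 -sofE.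
  case iT: (i \in T); first by rewrite /= (subsetP Tb0).
  have : (i \in b0 :\: T) = (i == y0) by rewrite Ey0 inE.
  by rewrite inE iT /= val_eqE => ->.
have NC : forall p q, p \in [:: a; b; c] -> q \in [:: a; b; c] -> p != q ->
    ~~ covered cs p q (val y0).
  move=> p q pT qT pq; apply/negP => cpq.
  have u3' : uniq [:: p; q; val y0].
    rewrite /= !inE negb_or pq /= andbT; apply/andP; split; apply/negP => /eqP e.
      by move: pT; rewrite e => pT'; rewrite pT' in y0n.
    by move: qT; rewrite e => qT'; rewrite qT' in y0n.
  have a3' : all (fun x => x < v) [:: p; q; val y0].
    rewrite /= ltn_ord !andbT; move: pT qT; rewrite !inE.
    by case/or3P => /eqP ->; case/or3P => /eqP ->; rewrite ?av ?bv ?cv.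
  have sb : sof v [:: p; q; val y0] \subset b0.
    rewrite -Eb0; apply: sof_sub => z; rewrite L4 !inE => /or3P [/eqP->|/eqP->|->].
    - by move: pT; rewrite !inE => ->.
    - by move: qT; rewrite !inE => ->.
    - by rewrite orbT.
  have [k kc ek] := covered_block sqs0 csB cpq u3' a3' b0B sb.
  apply: (negP nabc); apply/coveredP; exists k => //.
  have mk z (zv : z < v) : z \in [:: a; b; c] -> z \in k.
    move=> zl; have : Ordinal zv \in b0 by apply: (subsetP Tb0); rewrite sofE.
    by rewrite -ek sofE.
  by rewrite (mk a av) ?(mk b bv) ?(mk c cv) // !inE eqxx ?orbT.
case C: (used cs (val y0) || Nat.eqb (val y0) (ffresh v cs a b c)).
  apply: (step B (val y0)) => //; first exact: ltn_ord; first by rewrite Eb0.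
  by rewrite /cond memnE y0n C /= !NC // ?inE ?eqxx ?orbT //; lia.
move/negbT: C; rewrite negb_or => /andP [nu ne].
have yfl : val y0 \in [seq y <- iota 0 v | fresh cs a b c y].
  by rewrite mem_filter /fresh nu memnE y0n mem_iota /= ltn_ord.
have := in_head v yfl; rewrite -/(ffresh v cs a b c).
set t := ffresh v cs a b c.
rewrite mem_filter mem_iota /fresh memnE /= => /andP [/andP [tu tn] tv].
pose tt := Ordinal tv.
have y0t : y0 != tt.
  by apply/eqP => e; move: ne; rewrite nateqbE e /= eqxx.
apply: (transport_flow (swK y0 tt) (swK y0 tt)).
apply: (step _ t).
- exact: (transport_SQS (swK y0 tt) (swK y0 tt) sqs0).
- move=> k kc; rewrite -(sw_fix (y:=y0) (t:=tt)); last exact: (used_notin tu kc).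
    by apply: imset_f; apply: csB.
  exact: (used_notin nu kc).
- exact: tv.
- have -> : sof v [:: a; b; c; t] = sw y0 tt @^-1: sof v [:: a; b; c; val y0].
    by rewrite (@sw_new v y0 tt a b c y0n tn y0t).
  by apply: imset_f; rewrite Eb0.
- by rewrite /cond memnE tn nateqbE eqxx orbT /= !used_cov.
Qed.

Lemma main_v v n : runs v n = true -> forall B : {set {set 'I_v}}, is_SQS B -> has_zero_sum_flow n B.
Proof.
move=> R B sqs; apply: (search_sound sqs R) => //.
by move=> t tA; left.
Qed.

Lemma gen (X : finType) v n : #|X| = v -> runs v n = true ->
  forall B : {set {set X}}, is_SQS B -> has_zero_sum_flow n B.
Proof.
move=> HX R B sqs.
pose h (x : X) : 'I_v := cast_ord HX (enum_rank x).
pose g (i : 'I_v) : X := enum_val (cast_ord (esym HX) i).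
have hK : cancel h g by move=> x; rewrite /g /h cast_ordK enum_rankK.
have gK : cancel g h by move=> i; rewrite /g /h enum_valK cast_ordKV.
apply: (transport_flow hK gK); apply: (main_v R); exact: transport_SQS.
Qed.

Lemma runs8 : runs 8 3 = true. Proof. vm_compute. reflexivity. Qed.
Lemma runs10 : runs 10 2 = true. Proof. vm_compute. reflexivity. Qed.

Theorem mainTheorem13 :
  (forall (X : finType) (B : {set {set X}}),
      #|X| = 8%N -> is_SQS B -> has_zero_sum_flow 3 B) /\
  (forall (X : finType) (B : {set {set X}}),
      #|X| = 10%N -> is_SQS B -> has_zero_sum_flow 2 B).
Proof.
split=> X B HX; [exact: (gen HX runs8) | exact: (gen HX runs10)].
Qed.
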